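(* Let $s_j=\sigma_j+it_j\in\mathbb{C}$ ($j=1,2,3$) with $\sigma_1+\sigma_3>1$ and $\sigma_1+\sigma_2+\sigma_3>2$, where $s_1,s_2$ and $\sigma_3$ are fixed and $t_3$ varies. Then $$\int_2^T \left|\zeta_{AV,2}(s_1,s_2,s_3)\right|^2\,dt_3=\zeta_{AV,2}^{[2]}(s_1,s_2,2\sigma_3)\,T+O(1)\qquad (T\to\infty),$$ where the implied constant depends on $s_1,s_2$ and $\sigma_3$.
   Context: Write $s_j=\sigma_j+it_j$ with $\sigma_j,t_j\in\mathbb{R}$; complex powers $n^{s}=e^{s\log n}$ use the real logarithm of positive reals. The Apostol–Vu double zeta-function is $$\zeta_{AV,2}(s_1,s_2,s_3)=\sum_{m=1}^\infty\sum_{n<m}\frac{1}{m^{s_1}n^{s_2}(m+n)^{s_3}},$$ where $n$ runs over positive integers $n<m$; this series converges absolutely for $\sigma_1+\sigma_3>1$, $\sigma_1+\sigma_2+\sigma_3>2$, and $\zeta_{AV,2}$ extends meromorphically to $\mathbb{C}^3$ with singularities only on the hyperplanes $s_1+s_3=1-l$ and $s_1+s_2+s_3=2-l$ ($l\in\mathbb{Z}_{\ge0}$); $\zeta_{AV,2}$ denotes this continuation. Also define $$\zeta_{AV,2}^{[2]}(s_1,s_2,s_3)=\sum_{k=2}^\infty\left|\sum_{k/2<m\le k-1}\frac{1}{m^{s_1}(k-m)^{s_2}}\right|^2\frac{1}{k^{s_3}},$$ which converges absolutely when $2\sigma_1+\sigma_3>1$ and $2\sigma_1+2\sigma_2+\sigma_3>3$.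 *)

(* Defs.v *)
From Stdlib Require Import Reals.
From Coquelicot Require Import Coquelicot.
Open Scope R_scope.

Definition cpow (n : nat) (s : C) : C :=
  (exp (Re s * ln (INR n)) * cos (Im s * ln (INR n)),
   exp (Re s * ln (INR n)) * sin (Im s * ln (INR n))).

Fixpoint csum (f : nat -> C) (n : nat) : C :=
  match n with
  | O => RtoC 0
  | S n' => Cplus (csum f n') (f n')
  end.

Definition CSeries (a : nat -> C) : C :=
  (Series (fun k => Re (a k)), Series (fun k => Im (a k))).

Definition zetaAV2_inner (s1 s2 s3 : C) (m : nat) : C :=
  csum (fun n => if Nat.ltb 0 n
                 then Cinv (Cmult (Cmult (cpow m s1) (cpow n s2)) (cpow (m + n) s3))
                 else RtoC 0) m.

(* Apostol--Vu double zeta function (value of the double series, which is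
   absolutely convergent in the region where it is used). The m = 0 term is 0. *)
Definition zetaAV2 (s1 s2 s3 : C) : C :=
  CSeries (fun m => zetaAV2_inner s1 s2 s3 m).

Definition zetaAV2sq_inner (s1 s2 : C) (k : nat) : C :=
  csum (fun m => if andb (Nat.ltb k (2 * m)) (Nat.leb (m + 1) k)
                 then Cinv (Cmult (cpow m s1) (cpow (k - m) s2))
                 else RtoC 0) k.

(* zeta^{[2]}_{AV,2}(s1,s2,s3) = sum_{k>=2} |inner k|^2 / k^{s3}.
   (For k = 0, 1 the inner sum is empty, so these terms vanish.) *)
Definition zetaAV2sq (s1 s2 s3 : C) : C :=
  CSeries (fun k => if Nat.leb 2 k
                    then Cmult (RtoC (Cmod (zetaAV2sq_inner s1 s2 k) ^ 2)) (Cinv (cpow k s3))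
                    else RtoC 0).

(* Main.v *)
Require Import Defs.
From Stdlib Require Import Reals Lra Lia.
From Coquelicot Require Import Coquelicot.
Open Scope R_scope.

Fixpoint rsum (f : nat -> R) (n : nat) : R :=
  match n with O => 0 | S n' => rsum f n' + f n' end.

Lemma rsum_ext f g n : (forall i, (i < n)%nat -> f i = g i) -> rsum f n = rsum g n.
Proof. induction n; simpl; intros H; auto. rewrite IHn, H; auto. Qed.

Lemma rsum_plus f g n : rsum (fun i => f i + g i) n = rsum f n + rsum g n.
Proof. induction n; simpl; lra. Qed.

Lemma rsum_scal c f n : rsum (fun i => c * f i) n = c * rsum f n.
Proof. induction n; simpl; [ring| rewrite IHn; ring]. Qed.

Lemma rsum_zero n : rsum (fun _ => 0) n = 0.
Proof. induction n; simpl; lra. Qed.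

Lemma rsum_le f g n : (forall i, (i < n)%nat -> f i <= g i) -> rsum f n <= rsum g n.
Proof. induction n; simpl; intros H; [lra|]. specialize (IHn (fun i Hi => H i ltac:(lia))). specialize (H n ltac:(lia)). lra. Qed.

Lemma rsum_nonneg f n : (forall i, 0 <= f i) -> 0 <= rsum f n.
Proof. intros H; induction n; simpl; [lra|]. specialize (H n). lra. Qed.

Lemma rsum_abs f n : Rabs (rsum f n) <= rsum (fun i => Rabs (f i)) n.
Proof. induction n; simpl. rewrite Rabs_R0; lra. eapply Rle_trans. apply Rabs_triang. lra. Qed.

Lemma rsum_split f N d : rsum f (N + d) = rsum f N + rsum (fun i => f (N + i)%nat) d.
Proof. induction d; simpl. rewrite Nat.add_0_r; ring. rewrite Nat.add_succ_r; simpl. rewrite IHd; ring. Qed.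

Lemma rsum_mono f n m : (forall i, 0 <= f i) -> (n <= m)%nat -> rsum f n <= rsum f m.
Proof. intros H Hnm. replace m with (n + (m - n))%nat by lia. rewrite rsum_split.
  pose proof (rsum_nonneg (fun i => f (n+i)%nat) (m-n) (fun i => H _)). lra. Qed.

Lemma rsum_shift f n : rsum f (S n) = f O + rsum (fun i => f (S i)) n.
Proof. induction n; simpl in *. ring. rewrite IHn. ring. Qed.

Lemma rsum_rev h k : rsum (fun m => h (k - m)%nat) k = rsum (fun j => h (S j)) k.
Proof. induction k. reflexivity. rewrite rsum_shift. rewrite Nat.sub_0_r.
  simpl (S k - _)%nat. rewrite IHk. simpl. ring. Qed.

Lemma rsum_offset (h : nat -> R) l N :
  rsum (fun k => if Nat.ltb l k then h (k - l)%nat else 0) N =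
  rsum (fun j => if Nat.ltb 0 j then h j else 0) (N - l).
Proof. induction N. reflexivity. cbn [rsum]. rewrite IHN.
  destruct (Nat.le_gt_cases l N).
  - replace (S N - l)%nat with (S (N - l)) by lia. cbn [rsum].
    destruct (Nat.ltb_spec l N); destruct (Nat.ltb_spec 0 (N - l)); try lia; reflexivity.
  - replace (S N - l)%nat with O by lia. replace (N - l)%nat with O by lia. cbn [rsum].
    destruct (Nat.ltb_spec l N); try lia. ring.
Qed.

Lemma rsum_swap (f : nat -> nat -> R) M N :
  rsum (fun k => rsum (fun l => f k l) N) M = rsum (fun l => rsum (fun k => f k l) M) N.
Proof. induction M; simpl. rewrite rsum_zero; auto. rewrite IHM, <- rsum_plus. reflexivity. Qed.

Lemma rsum_mult f g n : rsum f n * rsum g n = rsum (fun k => rsum (fun l => f k * g l) n) n.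
Proof. rewrite Rmult_comm, <- rsum_scal. apply rsum_ext; intros.
  rewrite rsum_scal. ring. Qed.

Lemma rsum_zero_ext f n : (forall i, (i < n)%nat -> f i = 0) -> rsum f n = 0.
Proof. intros H. rewrite <- (rsum_zero n). apply rsum_ext. exact H. Qed.


Definition E (x : R) (n : nat) : R := exp (x * ln (INR n)).

Lemma E_pos x n : 0 < E x n.
Proof. apply exp_pos. Qed.

Lemma E_plus a b n : E (a + b) n = E a n * E b n.
Proof. unfold E. rewrite <- exp_plus. f_equal. ring. Qed.

Lemma ln_0 : ln 0 = 0.
Proof. unfold ln. destruct (Rlt_dec 0 0). exfalso; lra. reflexivity. Qed.

Lemma E_0 a : E a 0 = 1.
Proof. unfold E. simpl. rewrite ln_0, Rmult_0_r, exp_0. reflexivity. Qed.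

Lemma E_1 a : E a 1 = 1.
Proof. unfold E. simpl. rewrite ln_1, Rmult_0_r, exp_0. reflexivity. Qed.

Lemma INRpos n : (1 <= n)%nat -> 0 < INR n.
Proof. intros. apply lt_0_INR. lia. Qed.

Lemma ln_INR_nonneg n : 0 <= ln (INR n).
Proof. destruct n. simpl. rewrite ln_0. lra.
  rewrite <- ln_1. apply ln_le. lra. apply (le_INR 1). lia. Qed.

Lemma E_one n : (1 <= n)%nat -> E 1 n = INR n.
Proof. intros. unfold E. rewrite Rmult_1_l. apply exp_ln. now apply INRpos. Qed.

Lemma E_neg1 n : (1 <= n)%nat -> E (-1) n = / INR n.
Proof. intros. unfold E. replace (-1 * ln (INR n)) with (- ln (INR n)) by ring.
  rewrite exp_Ropp, exp_ln. reflexivity. now apply INRpos. Qed.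

Lemma E_le_1 x n : x <= 0 -> E x n <= 1.
Proof. intros. unfold E. rewrite <- exp_0. destruct (Req_dec (x * ln (INR n)) 0).
  rewrite H0; lra. left; apply exp_increasing.
  pose proof (ln_INR_nonneg n). nra. Qed.

Lemma exp_le_mono a b : a <= b -> exp a <= exp b.
Proof. intros [H|H]. left; now apply exp_increasing. subst; lra. Qed.

Lemma ln_mono m k : (1 <= m)%nat -> (m <= k)%nat -> ln (INR m) <= ln (INR k).
Proof. intros. apply ln_le. now apply INRpos. now apply le_INR. Qed.

Lemma E_mono_pos x m k : 0 <= x -> (1 <= m)%nat -> (m <= k)%nat -> E x m <= E x k.
Proof. intros. unfold E. apply exp_le_mono. pose proof (ln_mono m k H0 H1). nra. Qed.

Lemma E_mono_neg x m k : x <= 0 -> (1 <= m)%nat -> (m <= k)%nat -> E x k <= E x m.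
Proof. intros. unfold E. apply exp_le_mono. pose proof (ln_mono m k H0 H1). nra. Qed.

Lemma ln2_pos : 0 < ln 2.
Proof. rewrite <- ln_1. apply ln_increasing; lra. Qed.

Lemma E_cmp2 x a b : (1 <= a)%nat -> (a <= b)%nat -> (b <= 2 * a)%nat ->
  E x b <= exp (Rabs x * ln 2) * E x a /\ E x a <= exp (Rabs x * ln 2) * E x b.
Proof. intros Ha Hab Hb. unfold E. rewrite <- !exp_plus.
  pose proof (ln_mono a b Ha Hab) as L1.
  assert (L2 : ln (INR b) <= ln 2 + ln (INR a)).
  { rewrite <- ln_mult by (try lra; now apply INRpos).
    apply ln_le. apply INRpos; lia. replace (2 * INR a) with (INR (2 * a)).
    now apply le_INR. rewrite mult_INR. reflexivity. }
  pose proof ln2_pos.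
  split; apply exp_le_mono; destruct (Rle_dec 0 x).
  - rewrite Rabs_right by lra. nra.
  - rewrite Rabs_left by lra. nra.
  - rewrite Rabs_right by lra. nra.
  - rewrite Rabs_left by lra. nra.
Qed.

Lemma ln_le_minus1 x : 0 < x -> ln x <= x - 1.
Proof. intros. pose proof (exp_ineq1_le (ln x)). rewrite exp_ln in H0; lra. Qed.

Lemma tele p j : 1 < p -> (2 <= j)%nat ->
  E (-p) j <= (E (1 - p) (j - 1) - E (1 - p) j) / (p - 1).
Proof. intros Hp Hj.
  assert (Ha : 0 < INR j) by (apply INRpos; lia).
  assert (Hb : INR (j - 1) = INR j - 1) by (rewrite minus_INR by lia; simpl; ring).
  assert (Hb1 : 1 <= INR (j - 1)) by (apply (le_INR 1); lia).
  set (a := INR j) in *. set (b := INR (j-1)) in *.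
  assert (Hl : 1 / a <= ln a - ln b).
  { pose proof (ln_le_minus1 (b / a) ltac:(apply Rdiv_lt_0_compat; lra)).
    rewrite ln_div in H by lra. replace (b / a - 1) with (- (1 / a)) in H. lra.
    rewrite Hb. field. lra. }
  assert (H1 : E (1 - p) j = a * E (-p) j).
  { replace (1 - p) with (1 + - p) by ring. rewrite E_plus, E_one by lia. reflexivity. }
  assert (H2 : E (1 - p) (j - 1) = E (1 - p) j * exp ((p - 1) * (ln a - ln b))).
  { unfold E. fold a b. rewrite <- exp_plus. f_equal. ring. }
  pose proof (exp_ineq1_le ((p - 1) * (ln a - ln b))).
  pose proof (E_pos (-p) j). pose proof (E_pos (1-p) j).
  apply Rmult_le_reg_r with (p - 1). lra.
  unfold Rdiv. rewrite Rmult_assoc, Rinv_l, Rmult_1_r by lra.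
  rewrite H2.
  assert (A : E (1 - p) j * ((p - 1) * (ln a - ln b)) <= E (1 - p) j * (exp ((p - 1) * (ln a - ln b)) - 1)).
  { apply Rmult_le_compat_l; lra. }
  assert (B : E (- p) j * (p - 1) <= E (1 - p) j * ((p - 1) * (ln a - ln b))).
  { rewrite H1. replace (E (- p) j * (p - 1)) with (a * E (-p) j * ((p - 1) * (1 / a))) by (field; lra).
    rewrite Rmult_assoc, (Rmult_assoc a). apply Rmult_le_compat_l. lra.
    apply Rmult_le_compat_l. lra. apply Rmult_le_compat_l; lra. }
  lra.
Qed.

Lemma tail_gen p M n : 1 < p -> (1 <= M)%nat ->
  rsum (fun i => if Nat.ltb M i then E (-p) i else 0) (S M + n) <=
  (E (1 - p) M - E (1 - p) (M + n)) / (p - 1).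
Proof. intros Hp HM. induction n.
  - rewrite !Nat.add_0_r. unfold Rdiv. rewrite Rminus_diag, Rmult_0_l.
    right. apply rsum_zero_ext. intros.
    destruct (Nat.ltb_spec M i); try lia. reflexivity.
  - rewrite Nat.add_succ_r. cbn [rsum]. destruct (Nat.ltb_spec M (S M + n)); try lia.
    pose proof (tele p (S M + n) Hp ltac:(lia)).
    replace (S M + n - 1)%nat with (M + n)%nat in H0 by lia.
    replace (M + S n)%nat with (S M + n)%nat by lia.
    unfold Rdiv in *. lra.
Qed.

Lemma tail p M n : 1 < p -> (1 <= M)%nat ->
  rsum (fun i => if Nat.ltb M i then E (-p) i else 0) n <= E (1 - p) M / (p - 1).
Proof. intros Hp HM.
  eapply Rle_trans. apply rsum_mono with (m := (S M + n)%nat). intros i.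
  destruct (Nat.ltb M i). left; apply E_pos. lra. lia.
  eapply Rle_trans. apply tail_gen; auto.
  pose proof (E_pos (1-p) (M + n)). unfold Rdiv.
  apply Rmult_le_compat_r. left; apply Rinv_0_lt_compat; lra. lra.
Qed.

Lemma Zbound p n : 1 < p -> rsum (E (-p)) n <= 2 + 1 / (p - 1).
Proof. intros Hp.
  eapply Rle_trans.
  apply rsum_le with (g := fun i => (if Nat.leb i 1 then 1 else 0) + (if Nat.ltb 1 i then E (-p) i else 0)).
  { intros i _. destruct i as [|[|i]]; simpl. rewrite E_0; lra. rewrite E_1; lra. lra. }
  rewrite rsum_plus. pose proof (tail p 1 n Hp (le_n 1)). rewrite E_1 in H.
  assert (rsum (fun i => if Nat.leb i 1 then 1 else 0) n <= 2).
  { destruct n as [|[|n]]. simpl; lra. simpl; lra.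
    replace (S (S n)) with (2 + n)%nat by lia. rewrite rsum_split.
    replace (rsum (fun i => if Nat.leb (2 + i) 1 then 1 else 0) n) with 0.
    simpl; lra. symmetry; apply rsum_zero_ext; intros. reflexivity. }
  lra.
Qed.

Lemma tail2 p N d : 1 < p -> (2 <= N)%nat ->
  rsum (fun i => E (-p) (N + i)) d <= E (1 - p) (N - 1) / (p - 1).
Proof. intros Hp HN. pose proof (tail p (N - 1) (N + d) Hp ltac:(lia)).
  rewrite rsum_split in H.
  replace (rsum (fun i => if Nat.ltb (N - 1) i then E (-p) i else 0) N) with 0 in H.
  2:{ symmetry; apply rsum_zero_ext; intros. destruct (Nat.ltb_spec (N-1) i); try lia. reflexivity. }
  erewrite rsum_ext. rewrite Rplus_0_l in H. apply H.
  intros. simpl. destruct (Nat.ltb_spec (N-1) (N + i)); try lia. reflexivity.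
Qed.

Lemma E_lim p eps : 1 < p -> 0 < eps -> exists K0, forall K, (K0 <= K)%nat -> E (1 - p) K < eps.
Proof. intros Hp He.
  destruct (INR_unbounded (Rmax 1 (exp (ln eps / (1 - p))))) as [K0 HK0].
  exists K0. intros K HK. unfold E.
  assert (HK1 : exp (ln eps / (1 - p)) < INR K).
  { eapply Rlt_le_trans. 2: apply le_INR, HK. eapply Rle_lt_trans. 2: apply HK0. apply Rmax_r. }
  assert (HKp : 0 < INR K) by (pose proof (Rmax_l 1 (exp (ln eps / (1 - p)))); pose proof (le_INR _ _ HK); lra).
  apply ln_increasing in HK1. 2: apply exp_pos. rewrite ln_exp in HK1.
  rewrite <- (exp_ln eps) by lra. apply exp_increasing.
  assert (H : (1-p) * ln (INR K) < (1-p) * (ln eps / (1-p))) by (apply Rmult_lt_gt_compat_neg_l; lra).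
  replace ((1-p)*(ln eps/(1-p))) with (ln eps) in H by (field; lra). lra.
Qed.


Lemma csum_ext f g n : (forall i, (i < n)%nat -> f i = g i) -> csum f n = csum g n.
Proof. induction n; simpl; intros H; auto. rewrite IHn, H; auto. Qed.

Lemma csum_plus f g n : csum (fun i => Cplus (f i) (g i)) n = Cplus (csum f n) (csum g n).
Proof. induction n; simpl. ring. rewrite IHn. ring. Qed.

Lemma csum_mult_r f w n : csum (fun i => Cmult (f i) w) n = Cmult (csum f n) w.
Proof. induction n; simpl. ring. rewrite IHn. ring. Qed.

Lemma csum_zero_ext f n : (forall i, (i < n)%nat -> f i = RtoC 0) -> csum f n = RtoC 0.
Proof. induction n; simpl; intros H; auto. rewrite IHn, H; auto. ring. Qed.

Lemma Re_csum f n : Re (csum f n) = rsum (fun i => Re (f i)) n.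
Proof. induction n; simpl. reflexivity. rewrite <- IHn. reflexivity. Qed.

Lemma Im_csum f n : Im (csum f n) = rsum (fun i => Im (f i)) n.
Proof. induction n; simpl. reflexivity. rewrite <- IHn. reflexivity. Qed.

Lemma Cmod_csum f n : Cmod (csum f n) <= rsum (fun i => Cmod (f i)) n.
Proof. induction n; simpl. rewrite Cmod_0. lra.
  eapply Rle_trans. apply Cmod_triangle. lra. Qed.

Lemma cpow_inv n s : Cinv (cpow n s) = cpow n (Copp s).
Proof. unfold cpow, Cinv. simpl. destruct s as [a b]. unfold Re, Im; simpl.
  set (L := ln (INR n)).
  replace (- a * L) with (- (a * L)) by ring. replace (- b * L) with (- (b * L)) by ring.
  rewrite exp_Ropp, cos_neg, sin_neg. set (e := exp (a * L)).
  assert (He : 0 < e) by apply exp_pos.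
  pose proof (sin2_cos2 (b * L)) as H. unfold Rsqr in H.
  set (c := cos (b * L)) in *. set (d := sin (b * L)) in *.
  replace (e * c * (e * c * 1) + e * d * (e * d * 1)) with (e * e) by (transitivity (e * e * (d * d + c * c)); [rewrite H; ring | ring]).
  f_equal; field; lra.
Qed.

Lemma Cmod_cpow n s : Cmod (cpow n s) = E (Re s) n.
Proof. unfold Cmod, cpow, E. simpl.
  pose proof (sin2_cos2 (Im s * ln (INR n))) as H. unfold Rsqr in H.
  set (c := cos _) in *. set (d := sin _) in *. set (e := exp _).
  replace (e * c * (e * c * 1) + e * d * (e * d * 1)) with (e * e) by (transitivity (e * e * (d * d + c * c)); [rewrite H; ring | ring]).
  rewrite sqrt_square. reflexivity. left; apply exp_pos.
Qed.

Lemma cpow_neq0 n s : cpow n s <> RtoC 0.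
Proof. intros H. pose proof (Cmod_cpow n s). rewrite H, Cmod_0 in H0.
  pose proof (E_pos (Re s) n). lra. Qed.

Lemma Cinv_mult3 a b c : a <> RtoC 0 -> b <> RtoC 0 -> c <> RtoC 0 ->
  Cinv (Cmult (Cmult a b) c) = Cmult (Cinv (Cmult a b)) (Cinv c).
Proof. intros. field. auto. Qed.

Lemma Cmod_Cinv_cpow n s : Cmod (Cinv (cpow n s)) = E (- Re s) n.
Proof. rewrite cpow_inv, Cmod_cpow. reflexivity. Qed.

Lemma Cmod_Cinv2 m n a b : Cmod (Cinv (Cmult (cpow m a) (cpow n b))) = E (- Re a) m * E (- Re b) n.
Proof. replace (Cinv (Cmult (cpow m a) (cpow n b))) with (Cmult (Cinv (cpow m a)) (Cinv (cpow n b))).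
  rewrite Cmod_mult, !Cmod_Cinv_cpow. reflexivity.
  field. split; apply cpow_neq0. Qed.

Lemma Cmod_Cinv3 m n k a b c : Cmod (Cinv (Cmult (Cmult (cpow m a) (cpow n b)) (cpow k c))) =
  E (- Re a) m * E (- Re b) n * E (- Re c) k.
Proof. rewrite Cinv_mult3 by apply cpow_neq0. rewrite Cmod_mult, Cmod_Cinv2, Cmod_Cinv_cpow. reflexivity. Qed.

Ltac bdestr :=
  repeat match goal with
  | |- context [Nat.ltb ?a ?b] => destruct (Nat.ltb_spec a b)
  | |- context [Nat.leb ?a ?b] => destruct (Nat.leb_spec a b)
  | |- context [Nat.eqb ?a ?b] => destruct (Nat.eqb_spec a b)
  end; simpl.

Lemma csum_single (y : nat -> C) j m :
  csum (fun n => if Nat.eqb n j then y n else RtoC 0) m = if Nat.ltb j m then y j else RtoC 0.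
Proof. induction m; simpl. reflexivity. rewrite IHm. bdestr; try lia; subst; ring. Qed.

Section Reindex.
Variable X : nat -> nat -> C.

Definition SX N := csum (fun k => csum (fun m => if andb (Nat.ltb k (2*m)) (Nat.leb (m+1) k) then X m (k - m) else RtoC 0) k) N.
Definition QX N := csum (fun m => csum (fun n => if andb (Nat.ltb 0 n) (Nat.ltb (m + n) N) then X m n else RtoC 0) m) N.
Definition RX N := csum (fun m => csum (fun n => if andb (Nat.ltb 0 n) (Nat.leb N (m + n)) then X m n else RtoC 0) m) N.
Definition GX N := csum (fun m => csum (fun n => if Nat.ltb 0 n then X m n else RtoC 0) m) N.

Lemma SX_QX N : SX N = QX N.
Proof. induction N. reflexivity.
  unfold SX in *. cbn [csum]. rewrite IHN. unfold QX. cbn [csum].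
  rewrite (csum_zero_ext (fun n => if andb (Nat.ltb 0 n) (Nat.ltb (N + n) (S N)) then X N n else RtoC 0) N). 2:{ intros. bdestr; try lia; reflexivity. }
  rewrite Cplus_0_r.
  transitivity (csum (fun m => Cplus (csum (fun n => if andb (Nat.ltb 0 n) (Nat.ltb (m + n) N) then X m n else RtoC 0) m)
     (if andb (Nat.ltb N (2*m)) (Nat.leb (m+1) N) then X m (N - m) else RtoC 0)) N).
  - rewrite csum_plus. reflexivity.
  - apply csum_ext. intros m Hm.
    transitivity (Cplus (csum (fun n => if andb (Nat.ltb 0 n) (Nat.ltb (m + n) N) then X m n else RtoC 0) m)
       (csum (fun n => if Nat.eqb n (N - m) then (if andb (Nat.ltb 0 n) (Nat.ltb n m) then X m n else RtoC 0) else RtoC 0) m)).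
    + f_equal. rewrite csum_single. bdestr; try lia; try reflexivity.
    + rewrite <- csum_plus. apply csum_ext. intros n Hn. bdestr; try lia; subst; try ring.
Qed.

Lemma GX_split N : GX N = Cplus (QX N) (RX N).
Proof. unfold GX, QX, RX. rewrite <- csum_plus. apply csum_ext. intros m Hm.
  rewrite <- csum_plus. apply csum_ext. intros n Hn. bdestr; try lia; ring. Qed.

End Reindex.


Lemma sum_n_rsum (a : nat -> R) n : sum_n a n = rsum a (S n).
Proof. induction n. rewrite sum_O. simpl. ring.
  rewrite sum_Sn, IHn. reflexivity. Qed.

Lemma series_lim (u v : nat -> R) Bv :
  (forall m, Rabs (u m) <= v m) -> (forall n, rsum v n <= Bv) ->
  is_lim_seq (fun n => rsum u n) (Series u).
Proof. intros Huv Hv.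
  assert (Hv0 : forall m, 0 <= v m) by (intros m; pose proof (Rabs_pos (u m)); specialize (Huv m); lra).
  assert (Ev : ex_series v).
  { destruct (ex_finite_lim_seq_incr (sum_n v) Bv) as [l Hl].
    - intros n. rewrite !sum_n_rsum. change (rsum v (S (S n))) with (rsum v (S n) + v (S n)). specialize (Hv0 (S n)). lra.
    - intros n. rewrite sum_n_rsum. apply Hv.
    - exists l. exact Hl. }
  assert (Eu : ex_series u).
  { apply ex_series_Rabs. apply (@ex_series_le R_AbsRing R_CompleteNormedModule _ v); auto.
    intros n. unfold norm; simpl. unfold abs; simpl. rewrite Rabs_Rabsolu. apply Huv. }
  pose proof (Series_correct u Eu) as Hs.
  apply is_lim_seq_incr_1.
  eapply is_lim_seq_ext. 2: exact Hs. intros n; simpl. apply sum_n_rsum.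
Qed.

Lemma series_tail (u v : nat -> R) Bv N tau :
  (forall m, Rabs (u m) <= v m) -> (forall n, rsum v n <= Bv) ->
  (forall d, rsum (fun i => v (N + i)%nat) d <= tau) ->
  Rabs (Series u - rsum u N) <= tau.
Proof. intros Huv Hv Ht.
  pose proof (series_lim u v Bv Huv Hv) as Hl.
  apply (is_lim_seq_incr_n _ N) in Hl.
  assert (Hd : forall d, Rabs (rsum u (d + N) - rsum u N) <= tau).
  { intros d. rewrite Nat.add_comm, rsum_split.
    replace (rsum u N + rsum (fun i => u (N + i)%nat) d - rsum u N) with (rsum (fun i => u (N + i)%nat) d) by ring.
    eapply Rle_trans. apply rsum_abs. eapply Rle_trans. 2: apply (Ht d).
    apply rsum_le. intros; apply Huv. }
  apply Rabs_le. split.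
  - assert (Rbar_le (rsum u N - tau) (Series u)).
    { eapply is_lim_seq_le. 2: apply is_lim_seq_const. 2: exact Hl.
      intros d; simpl. specialize (Hd d). apply Rabs_le_between in Hd. lra. }
    simpl in H. lra.
  - assert (Rbar_le (Series u) (rsum u N + tau)).
    { eapply is_lim_seq_le. 3: apply is_lim_seq_const. 2: exact Hl.
      intros d; simpl. specialize (Hd d). apply Rabs_le_between in Hd. lra. }
    simpl in H. lra.
Qed.

Lemma Cmod_le_ReIm z : Cmod z <= Rabs (Re z) + Rabs (Im z).
Proof. unfold Cmod. rewrite <- (sqrt_Rsqr (Rabs (Re z) + Rabs (Im z))).
  2: pose proof (Rabs_pos (Re z)); pose proof (Rabs_pos (Im z)); lra.
  apply sqrt_le_1_alt. unfold Rsqr. simpl.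
  pose proof (Rabs_pos (Re z)); pose proof (Rabs_pos (Im z)).
  change (fst z) with (Re z). change (snd z) with (Im z).
  pose proof (pow2_abs (Re z)). pose proof (pow2_abs (Im z)). simpl in *. nra.
Qed.

Lemma im_le_Cmod z : Rabs (Im z) <= Cmod z.
Proof. unfold Cmod. rewrite <- sqrt_Rsqr_abs. apply sqrt_le_1_alt. unfold Rsqr. simpl.
  change (snd z) with (Im z). pose proof (pow2_ge_0 (fst z)). simpl in H. lra. Qed.


Section Main.
Variables (s1 s2 : C) (sig3 eta rho delta : R).
Hypothesis Heta : 0 <= eta.
Hypothesis Hrho : rho = Re s2 + eta.
Hypothesis Hrho1 : 1 < rho.
Hypothesis Hdelta : Re s1 + sig3 - eta = 1 + delta.
Hypothesis Hd0 : 0 < delta.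

Definition c1 := exp (Rabs (- Re s1) * ln 2).
Definition c3 := exp (Rabs (- sig3) * ln 2).
Definition Zr := 2 + 1 / (rho - 1).
Definition gg k := zetaAV2sq_inner s1 s2 k.
Definition xx m n t := Cinv (Cmult (Cmult (cpow m s1) (cpow n s2)) (cpow (m + n) (sig3, t))).
Definition pp := 1 + delta.
Definition CC := c1 * Zr.
Definition B0 := c3 * Zr.

Lemma c1_pos : 0 < c1. Proof. apply exp_pos. Qed.
Lemma c3_pos : 0 < c3. Proof. apply exp_pos. Qed.
Lemma Zr_pos : 0 < Zr.
Proof. unfold Zr. assert (0 < 1 / (rho - 1)) by (apply Rdiv_lt_0_compat; lra). lra. Qed.

Lemma sum_rho_shift k : rsum (fun j => E (- rho) (S j)) k <= Zr.
Proof. eapply Rle_trans. 2: apply (Zbound rho (S k) Hrho1).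
  rewrite rsum_shift. pose proof (E_pos (-rho) 0). lra. Qed.

Lemma split_s2 j k : (1 <= j)%nat -> (j <= k)%nat -> E (- Re s2) j <= E eta k * E (- rho) j.
Proof. intros. replace (- Re s2) with (eta + - rho) by lra. rewrite E_plus.
  apply Rmult_le_compat_r. left; apply E_pos. apply E_mono_pos; auto. Qed.

Lemma B1 k : Cmod (gg k) <= c1 * Zr * E (- Re s1 + eta) k.
Proof. unfold gg, zetaAV2sq_inner. eapply Rle_trans. apply Cmod_csum.
  eapply Rle_trans.
  apply rsum_le with (g := fun m => (c1 * E (- Re s1) k * E eta k) * E (- rho) (S (k - m - 1))).
  { intros m Hm. destruct (andb (Nat.ltb k (2 * m)) (Nat.leb (m + 1) k)) eqn:Hc.
    - apply andb_prop in Hc. destruct Hc as [Hc1 Hc2].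
      apply Nat.ltb_lt in Hc1. apply Nat.leb_le in Hc2.
      rewrite Cmod_Cinv2. replace (S (k - m - 1)) with (k - m)%nat by lia.
      destruct (E_cmp2 (- Re s1) m k ltac:(lia) ltac:(lia) ltac:(lia)) as [_ H1].
      pose proof (split_s2 (k - m) k ltac:(lia) ltac:(lia)).
      pose proof (E_pos (- Re s1) m). pose proof (E_pos (- Re s2) (k - m)).
      pose proof (E_pos eta k). pose proof (E_pos (-rho) (k-m)). pose proof c1_pos.
      pose proof (E_pos (- Re s1) k).
      unfold c1 in *. set (cc := exp _) in *.
      apply Rle_trans with ((cc * E (- Re s1) k) * (E eta k * E (- rho) (k - m))).
      apply Rmult_le_compat; lra. right; ring.
    - rewrite Cmod_0. pose proof c1_pos. pose proof (E_pos (- Re s1) k).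
      pose proof (E_pos eta k). pose proof (E_pos (-rho) (S (k - m - 1))).
      apply Rlt_le. repeat apply Rmult_lt_0_compat; auto. }
  rewrite rsum_scal.
  replace (rsum (fun m => E (- rho) (S (k - m - 1))) k) with (rsum (fun j => E (- rho) (S j)) k).
  2:{ rewrite <- rsum_rev. apply rsum_ext. intros. f_equal. f_equal. lia. }
  pose proof (sum_rho_shift k). rewrite E_plus.
  pose proof c1_pos. pose proof (E_pos (- Re s1) k). pose proof (E_pos eta k).
  assert (0 < c1 * E (- Re s1) k * E eta k) by (repeat apply Rmult_lt_0_compat; auto).
  apply Rle_trans with (c1 * E (- Re s1) k * E eta k * Zr). apply Rmult_le_compat_l; lra.
  right; ring.
Qed.

Definition alpha k := E (- sig3) k * Cmod (gg k).

Lemma alpha_nonneg k : 0 <= alpha k.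
Proof. unfold alpha. pose proof (E_pos (-sig3) k). pose proof (Cmod_ge_0 (gg k)). nra. Qed.

Lemma B2 k : alpha k <= CC * E (- pp) k.
Proof. unfold alpha, CC, pp. pose proof (B1 k). pose proof (E_pos (-sig3) k).
  replace (- (1 + delta)) with (- sig3 + (- Re s1 + eta)) by lra. rewrite E_plus.
  apply Rle_trans with (E (- sig3) k * (c1 * Zr * E (- Re s1 + eta) k)).
  apply Rmult_le_compat_l; lra. right; ring. Qed.

Lemma B3 m t : rsum (fun n => if Nat.ltb 0 n then Cmod (xx m n t) else 0) m <= B0 * E (- pp) m.
Proof. eapply Rle_trans.
  apply rsum_le with (g := fun n => (c3 * E (- Re s1) m * E eta m * E (- sig3) m) * E (- rho) n).
  { intros n Hn. destruct (Nat.ltb_spec 0 n).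
    - unfold xx. rewrite Cmod_Cinv3. simpl (Re (sig3, t)).
      destruct (E_cmp2 (- sig3) m (m + n) ltac:(lia) ltac:(lia) ltac:(lia)) as [H1 _].
      pose proof (split_s2 n m ltac:(lia) ltac:(lia)).
      pose proof (E_pos (- Re s1) m). pose proof (E_pos (- Re s2) n).
      pose proof (E_pos eta m). pose proof (E_pos (-rho) n). pose proof c3_pos.
      pose proof (E_pos (- sig3) (m+n)).
      unfold c3 in *. set (cc := exp _) in *.
      apply Rle_trans with (E (- Re s1) m * (E eta m * E (- rho) n) * (cc * E (- sig3) m)).
      apply Rmult_le_compat. nra. lra. apply Rmult_le_compat_l; lra. lra.
      right; ring.
    - pose proof c3_pos. pose proof (E_pos (- Re s1) m). pose proof (E_pos eta m).
      pose proof (E_pos (-sig3) m). pose proof (E_pos (-rho) n).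
      apply Rlt_le. repeat apply Rmult_lt_0_compat; auto. }
  rewrite rsum_scal. pose proof (Zbound rho m Hrho1). fold Zr in H.
  pose proof c3_pos. pose proof (E_pos (- Re s1) m). pose proof (E_pos eta m). pose proof (E_pos (-sig3) m).
  assert (0 < c3 * E (- Re s1) m * E eta m * E (- sig3) m) by (repeat apply Rmult_lt_0_compat; auto).
  apply Rle_trans with (c3 * E (- Re s1) m * E eta m * E (- sig3) m * Zr). apply Rmult_le_compat_l; lra.
  unfold B0, pp. replace (- (1 + delta)) with (- Re s1 + eta + - sig3) by lra. rewrite !E_plus.
  right; ring.
Qed.


Lemma gg_small k : (k < 2)%nat -> gg k = RtoC 0.
Proof. intros. unfold gg, zetaAV2sq_inner. apply csum_zero_ext. intros. bdestr; try lia; reflexivity. Qed.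

Definition HH N t := csum (fun k => Cmult (gg k) (Cinv (cpow k (sig3, t)))) N.
Definition inner t m := zetaAV2_inner s1 s2 (sig3, t) m.

Lemma SX_HH N t : SX (fun m n => xx m n t) N = HH N t.
Proof. unfold SX, HH. apply csum_ext. intros k Hk. unfold gg, zetaAV2sq_inner.
  rewrite <- csum_mult_r. apply csum_ext. intros m Hm.
  destruct (andb (Nat.ltb k (2 * m)) (Nat.leb (m + 1) k)) eqn:Hc.
  - apply andb_prop in Hc. destruct Hc as [_ Hc2]. apply Nat.leb_le in Hc2.
    unfold xx. replace (m + (k - m))%nat with k by lia. apply Cinv_mult3; apply cpow_neq0.
  - ring.
Qed.

Lemma G_split N t : csum (inner t) N = Cplus (HH N t) (RX (fun m n => xx m n t) N).
Proof. rewrite <- SX_HH, SX_QX. rewrite <- GX_split. reflexivity. Qed.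

Lemma Cmod_if (b : bool) z : Cmod (if b then z else RtoC 0) = if b then Cmod z else 0.
Proof. destruct b; auto. apply Cmod_0. Qed.

Lemma inner_bound t m : Cmod (inner t m) <= B0 * E (- pp) m.
Proof. unfold inner, zetaAV2_inner. eapply Rle_trans. apply Cmod_csum.
  eapply Rle_trans. 2: apply (B3 m t). right. apply rsum_ext. intros. rewrite Cmod_if. reflexivity. Qed.

Lemma pp1 : 1 < pp. Proof. unfold pp; lra. Qed.

Lemma B0_pos : 0 < B0. Proof. unfold B0. pose proof c3_pos. pose proof Zr_pos. nra. Qed.

Lemma RX_bound N t : (2 <= N)%nat ->
  Cmod (RX (fun m n => xx m n t) N) <= B0 * (E (1 - pp) (Nat.div2 N) / (pp - 1)).
Proof. intros HN. pose proof (Nat.div2_odd N) as Hd.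
  assert (Hd' : (2 * Nat.div2 N <= N <= 2 * Nat.div2 N + 1)%nat) by (destruct (Nat.odd N); simpl in Hd; lia).
  unfold RX. eapply Rle_trans. apply Cmod_csum.
  eapply Rle_trans.
  apply rsum_le with (g := fun m => B0 * (if Nat.ltb (Nat.div2 N) m then E (- pp) m else 0)).
  { intros m Hm. destruct (Nat.ltb_spec (Nat.div2 N) m).
    - eapply Rle_trans. apply Cmod_csum. eapply Rle_trans. 2: apply (B3 m t).
      apply rsum_le. intros n Hn. rewrite Cmod_if. bdestr; try lra. apply Cmod_ge_0.
    - rewrite csum_zero_ext. rewrite Cmod_0. lra. intros n Hn. bdestr; try lia; reflexivity. }
  rewrite rsum_scal. apply Rmult_le_compat_l. left; apply B0_pos.
  apply tail. apply pp1. lia.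
Qed.

Definition epsN N := 2 * (B0 * (E (1 - pp) (N - 1) / (pp - 1))) + B0 * (E (1 - pp) (Nat.div2 N) / (pp - 1)).

Lemma series_part (u : nat -> R) N : (2 <= N)%nat -> (forall m, Rabs (u m) <= B0 * E (- pp) m) ->
  Rabs (Series u - rsum u N) <= B0 * (E (1 - pp) (N - 1) / (pp - 1)).
Proof. intros HN Hu. apply series_tail with (v := fun m => B0 * E (- pp) m) (Bv := B0 * (2 + 1 / (pp - 1))); auto.
  - intros n. rewrite rsum_scal. apply Rmult_le_compat_l. left; apply B0_pos. apply Zbound, pp1.
  - intros d. rewrite rsum_scal. apply Rmult_le_compat_l. left; apply B0_pos. apply tail2. apply pp1. auto.
Qed.

Lemma uniform N t : (2 <= N)%nat -> Cmod (Cminus (zetaAV2 s1 s2 (sig3, t)) (HH N t)) <= epsN N.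
Proof. intros HN.
  replace (Cminus (zetaAV2 s1 s2 (sig3, t)) (HH N t)) with
    (Cplus (Cminus (zetaAV2 s1 s2 (sig3, t)) (csum (inner t) N)) (RX (fun m n => xx m n t) N)).
  2:{ rewrite G_split. ring. }
  eapply Rle_trans. apply Cmod_triangle. unfold epsN.
  pose proof (RX_bound N t HN).
  assert (Cmod (Cminus (zetaAV2 s1 s2 (sig3, t)) (csum (inner t) N)) <= 2 * (B0 * (E (1 - pp) (N - 1) / (pp - 1)))).
  { eapply Rle_trans. apply Cmod_le_ReIm.
    replace (Re (Cminus (zetaAV2 s1 s2 (sig3, t)) (csum (inner t) N))) with
      (Series (fun m => Re (inner t m)) - rsum (fun m => Re (inner t m)) N).
    2:{ rewrite <- Re_csum. reflexivity. }
    replace (Im (Cminus (zetaAV2 s1 s2 (sig3, t)) (csum (inner t) N))) with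
      (Series (fun m => Im (inner t m)) - rsum (fun m => Im (inner t m)) N).
    2:{ rewrite <- Im_csum. reflexivity. }
    pose proof (series_part (fun m => Re (inner t m)) N HN).
    pose proof (series_part (fun m => Im (inner t m)) N HN).
    assert (forall m, Rabs (Re (inner t m)) <= B0 * E (- pp) m).
    { intros. eapply Rle_trans. apply re_le_Cmod. apply inner_bound. }
    assert (forall m, Rabs (Im (inner t m)) <= B0 * E (- pp) m).
    { intros. eapply Rle_trans. apply im_le_Cmod. apply inner_bound. }
    specialize (H0 H2). specialize (H1 H3). lra. }
  lra.
Qed.


Definition aa k := Re (gg k).
Definition bb k := Im (gg k).
Definition rr k := E (- sig3) k.
Definition LL k := ln (INR k).

Lemma z_re k t : Re (Cmult (gg k) (Cinv (cpow k (sig3, t)))) = rr k * (aa k * cos (t * LL k) + bb k * sin (t * LL k)).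
Proof. rewrite cpow_inv. unfold cpow, rr, aa, bb, LL, E. simpl.
  rewrite <- !Ropp_mult_distr_l, cos_neg, sin_neg.
  change (fst (gg k)) with (Re (gg k)). change (snd (gg k)) with (Im (gg k)). ring. Qed.

Lemma z_im k t : Im (Cmult (gg k) (Cinv (cpow k (sig3, t)))) = rr k * (bb k * cos (t * LL k) - aa k * sin (t * LL k)).
Proof. rewrite cpow_inv. unfold cpow, rr, aa, bb, LL, E. simpl.
  rewrite <- !Ropp_mult_distr_l, cos_neg, sin_neg.
  change (fst (gg k)) with (Re (gg k)). change (snd (gg k)) with (Im (gg k)). ring. Qed.

Definition PP k l := aa k * aa l + bb k * bb l.
Definition QQ k l := bb k * aa l - aa k * bb l.
Definition FF k l t := rr k * rr l * (PP k l * cos (t * (LL k - LL l)) + QQ k l * sin (t * (LL k - LL l))).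

Lemma HH_sq N t : Cmod (HH N t) ^ 2 = rsum (fun k => rsum (fun l => FF k l t) N) N.
Proof. rewrite Cmod2_alt. unfold HH. rewrite Re_csum, Im_csum.
  rewrite <- !Rsqr_pow2. unfold Rsqr.
  rewrite !rsum_mult, <- rsum_plus. apply rsum_ext. intros k Hk. rewrite <- rsum_plus. apply rsum_ext. intros l Hl.
  rewrite !z_re, !z_im. unfold FF.
  replace (t * (LL k - LL l)) with (t * LL k - t * LL l) by ring. rewrite cos_minus, sin_minus.
  unfold PP, QQ. ring.
Qed.

Definition JJ k l T := let w := LL k - LL l in
  if Req_EM_T w 0 then (T - 2) * (rr k * rr l * PP k l)
  else rr k * rr l * ((PP k l * (sin (T * w) - sin (2 * w)) - QQ k l * (cos (T * w) - cos (2 * w))) / w).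

Lemma FF_int k l T : is_RInt (FF k l) 2 T (JJ k l T).
Proof. unfold JJ. destruct (Req_EM_T (LL k - LL l) 0) as [Hw|Hw].
  - change ((T - 2) * (rr k * rr l * PP k l)) with (scal (V := R_NormedModule) (T - 2) (rr k * rr l * PP k l)).
    eapply is_RInt_ext. 2: apply is_RInt_const. intros x _. unfold FF. rewrite Hw.
    rewrite Rmult_0_r, cos_0, sin_0. simpl. ring.
  - set (w := LL k - LL l) in *.
    set (G := fun t => rr k * rr l * ((PP k l * sin (t * w) - QQ k l * cos (t * w)) / w)).
    replace (rr k * rr l * ((PP k l * (sin (T * w) - sin (2 * w)) - QQ k l * (cos (T * w) - cos (2 * w))) / w))
      with (minus (G T) (G 2)).
    2:{ unfold G, minus, plus, opp; simpl. field. auto. }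
    apply (is_RInt_derive (V := R_CompleteNormedModule)).
    + intros x _. unfold G, FF. fold w. auto_derive. auto. field. auto.
    + intros x _. unfold FF. apply (ex_derive_continuous (K := R_AbsRing) (V := R_NormedModule)). auto_derive. auto.
Qed.

Lemma is_RInt_rsum (f : nat -> R -> R) (I : nat -> R) a b n :
  (forall i, is_RInt (f i) a b (I i)) -> is_RInt (fun t => rsum (fun i => f i t) n) a b (rsum I n).
Proof. intros H. induction n.
  - simpl. assert (Hc := is_RInt_const (V:=R_NormedModule) a b 0).
    replace (scal (b - a) 0) with ((b - a) * 0) in Hc by reflexivity.
    rewrite Rmult_0_r in Hc. exact Hc.
  - simpl. apply (is_RInt_plus _ _ a b _ _ IHn (H n)).
Qed.


Lemma ab_small k : (k < 2)%nat -> aa k = 0 /\ bb k = 0.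
Proof. intros. unfold aa, bb. rewrite gg_small by auto. simpl. auto. Qed.

Lemma alpha_sq k : alpha k ^ 2 = rr k ^ 2 * (aa k ^ 2 + bb k ^ 2).
Proof. unfold alpha, rr, aa, bb. rewrite Rpow_mult_distr, Cmod2_alt. reflexivity. Qed.

Lemma abs_PQ k l : Rabs (PP k l) + Rabs (QQ k l) <= 4 * Cmod (gg k) * Cmod (gg l).
Proof. unfold PP, QQ, aa, bb.
  pose proof (re_le_Cmod (gg k)). pose proof (re_le_Cmod (gg l)).
  pose proof (im_le_Cmod (gg k)). pose proof (im_le_Cmod (gg l)).
  set (x1 := Re (gg k)) in *. set (y1 := Im (gg k)) in *. set (x2 := Re (gg l)) in *. set (y2 := Im (gg l)) in *.
  assert (Rabs (x1 * x2 + y1 * y2) + Rabs (y1 * x2 - x1 * y2) <= (Rabs x1 + Rabs y1) * (Rabs x2 + Rabs y2)).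
  { pose proof (Rabs_triang (x1 * x2) (y1 * y2)). unfold Rminus.
    pose proof (Rabs_triang (y1 * x2) (- (x1 * y2))). rewrite Rabs_Ropp in H4.
    rewrite !Rabs_mult in *. nra. }
  pose proof (Rabs_pos x1). pose proof (Rabs_pos x2). pose proof (Rabs_pos y1). pose proof (Rabs_pos y2).
  assert ((Rabs x1 + Rabs y1) * (Rabs x2 + Rabs y2) <= (2 * Cmod (gg k)) * (2 * Cmod (gg l))).
  { apply Rmult_le_compat; lra. }
  lra.
Qed.

Lemma rr_pos k : 0 < rr k. Proof. apply E_pos. Qed.

Lemma JJ_bound k l T : LL k - LL l <> 0 -> Rabs (JJ k l T) <= 8 * (alpha k * alpha l) / Rabs (LL k - LL l).
Proof. intros Hw. unfold JJ. destruct (Req_EM_T (LL k - LL l) 0) as [H|_]. contradiction.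
  set (w := LL k - LL l) in *.
  assert (Haw : 0 < Rabs w) by (apply Rabs_pos_lt; auto).
  pose proof (SIN_bound (T * w)). pose proof (SIN_bound (2 * w)).
  pose proof (COS_bound (T * w)). pose proof (COS_bound (2 * w)).
  assert (Hs : Rabs (sin (T * w) - sin (2 * w)) <= 2) by (apply Rabs_le; lra).
  assert (Hc : Rabs (cos (T * w) - cos (2 * w)) <= 2) by (apply Rabs_le; lra).
  unfold Rdiv. rewrite !Rabs_mult, Rabs_inv.
  pose proof (rr_pos k). pose proof (rr_pos l).
  rewrite (Rabs_right (rr k)), (Rabs_right (rr l)) by lra.
  assert (HN : Rabs (PP k l * (sin (T * w) - sin (2 * w)) - QQ k l * (cos (T * w) - cos (2 * w))) <= 2 * (Rabs (PP k l) + Rabs (QQ k l))).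
  { unfold Rminus at 1. eapply Rle_trans. apply Rabs_triang. rewrite Rabs_Ropp, !Rabs_mult.
    pose proof (Rabs_pos (PP k l)). pose proof (Rabs_pos (QQ k l)).
    fold (sin (T * w) - sin (2 * w)) in *. fold (cos (T * w) - cos (2 * w)) in *. nra. }
  pose proof (abs_PQ k l).
  assert (Hi : 0 < / Rabs w) by (apply Rinv_0_lt_compat; auto).
  unfold alpha.
  pose proof (Cmod_ge_0 (gg k)). pose proof (Cmod_ge_0 (gg l)).
  assert (A : rr k * rr l * Rabs (PP k l * (sin (T * w) - sin (2 * w)) - QQ k l * (cos (T * w) - cos (2 * w)))
     <= 8 * (E (- sig3) k * Cmod (gg k) * (E (- sig3) l * Cmod (gg l)))).
  { apply Rle_trans with (rr k * rr l * (2 * (4 * Cmod (gg k) * Cmod (gg l)))).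
    apply Rmult_le_compat_l. nra. lra. unfold rr. right; ring. }
  rewrite <- Rmult_assoc. apply Rmult_le_compat_r; lra.
Qed.

Definition p1 := 1 + 3 * delta / 2.
Definition p2 := 1 + delta / 2.

Lemma LL_diff k l : (2 <= l)%nat -> (l < k)%nat -> INR (k - l) / INR k <= LL k - LL l.
Proof. intros. unfold LL.
  assert (0 < INR l) by (apply INRpos; lia). assert (0 < INR k) by (apply INRpos; lia).
  pose proof (ln_le_minus1 (INR l / INR k) ltac:(apply Rdiv_lt_0_compat; lra)).
  rewrite ln_div in H3 by lra. rewrite minus_INR by lia.
  replace ((INR k - INR l) / INR k) with (- (INR l / INR k - 1)) by (field; lra). lra. Qed.

Lemma pair_bound k l : (2 <= l)%nat -> (l < k)%nat ->
  alpha k * alpha l / (LL k - LL l) <= CC ^ 2 * (E (- p1) l * E (- p2) (k - l)).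
Proof. intros Hl Hk. pose proof (LL_diff k l Hl Hk) as HD.
  assert (Hkl : 0 < INR (k - l)) by (apply INRpos; lia).
  assert (Hk0 : 0 < INR k) by (apply INRpos; lia).
  assert (Hw : 0 < LL k - LL l) by (eapply Rlt_le_trans; [|exact HD]; apply Rdiv_lt_0_compat; lra).
  pose proof (B2 k). pose proof (B2 l). pose proof (alpha_nonneg k). pose proof (alpha_nonneg l).
  pose proof (E_pos (-pp) k). pose proof (E_pos (-pp) l).
  assert (HH1 : alpha k * alpha l / (LL k - LL l) <= CC * E (- pp) k * (CC * E (- pp) l) * (INR k / INR (k - l))).
  { unfold Rdiv. apply Rmult_le_compat. nra. left; apply Rinv_0_lt_compat; lra.
    apply Rmult_le_compat; lra.
    replace (INR k * / INR (k - l)) with (/ (INR (k - l) / INR k)) by (field; lra).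
    apply Rinv_le_contravar. apply Rdiv_lt_0_compat; lra. exact HD. }
  eapply Rle_trans. apply HH1.
  assert (E1 : E (- pp) k * INR k = E (- delta / 2) k * E (- delta / 2) k).
  { rewrite <- (E_one k) by lia. rewrite <- !E_plus. f_equal. unfold pp; lra. }
  assert (E2 : / INR (k - l) = E (-1) (k - l)) by (rewrite E_neg1 by lia; reflexivity).
  assert (M1 : E (- delta / 2) k <= E (- delta / 2) l) by (apply E_mono_neg; try lia; lra).
  assert (M2 : E (- delta / 2) k <= E (- delta / 2) (k - l)) by (apply E_mono_neg; try lia; lra).
  assert (E3 : E (- p1) l = E (- pp) l * E (- delta / 2) l) by (rewrite <- E_plus; f_equal; unfold p1, pp; lra).
  assert (E4 : E (- p2) (k - l) = E (- delta / 2) (k - l) * E (-1) (k - l)) by (rewrite <- E_plus; f_equal; unfold p2; lra).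
  replace (CC * E (- pp) k * (CC * E (- pp) l) * (INR k / INR (k - l))) with
    (CC ^ 2 * E (- pp) l * (E (- pp) k * INR k) * / INR (k - l)) by (field; lra).
  rewrite E1, E2, E3, E4.
  pose proof (E_pos (-delta/2) k). pose proof (E_pos (-delta/2) l). pose proof (E_pos (-delta/2) (k-l)).
  pose proof (E_pos (-1) (k-l)).
  assert (0 <= CC ^ 2) by (apply pow2_ge_0).
  apply Rle_trans with (CC ^ 2 * E (- pp) l * (E (- delta / 2) l * E (- delta / 2) (k - l)) * E (-1) (k - l)).
  apply Rmult_le_compat_r. lra. apply Rmult_le_compat_l. nra. apply Rmult_le_compat; lra.
  right; ring.
Qed.

Definition Aq k l := if Nat.ltb k l then E (- p1) k * E (- p2) (l - k) else 0.
Definition Psi k l := 8 * CC ^ 2 * (Aq k l + Aq l k).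

Lemma Aq_nonneg k l : 0 <= Aq k l.
Proof. unfold Aq. destruct (Nat.ltb k l). pose proof (E_pos (-p1) k). pose proof (E_pos (-p2) (l-k)). nra. lra. Qed.

Lemma Psi_nonneg k l : 0 <= Psi k l.
Proof. unfold Psi. pose proof (Aq_nonneg k l). pose proof (Aq_nonneg l k). pose proof (pow2_ge_0 CC). nra. Qed.

Lemma LL_neq k l : (2 <= k)%nat -> (2 <= l)%nat -> k <> l -> LL k - LL l <> 0.
Proof. intros. unfold LL. intros H2. apply H1. apply INR_eq. apply ln_inv.
  apply INRpos; lia. apply INRpos; lia. lra. Qed.

Lemma LL_lt k l : (2 <= l)%nat -> (l < k)%nat -> LL l < LL k.
Proof. intros. unfold LL. apply ln_increasing. apply INRpos; lia. apply lt_INR; lia. Qed.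

Lemma JJ_pair k l T : Rabs (JJ k l T - (if Nat.eqb k l then (T - 2) * alpha k ^ 2 else 0)) <= Psi k l.
Proof. pose proof (Psi_nonneg k l).
  destruct (Nat.eqb_spec k l) as [<-|Hne].
  - unfold JJ. destruct (Req_EM_T (LL k - LL k) 0) as [_|H0]. 2: exfalso; apply H0; ring.
    rewrite alpha_sq. unfold PP. replace ((T - 2) * (rr k * rr k * (aa k * aa k + bb k * bb k)) -
      (T - 2) * (rr k ^ 2 * (aa k ^ 2 + bb k ^ 2))) with 0 by ring. rewrite Rabs_R0; auto.
  - destruct (Nat.lt_ge_cases k 2) as [Hk|Hk]; [|destruct (Nat.lt_ge_cases l 2) as [Hl|Hl]].
    + destruct (ab_small k Hk) as [Ha Hb].
      assert (PP k l = 0 /\ QQ k l = 0) as [HP HQ] by (unfold PP, QQ; rewrite Ha, Hb; split; ring).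
      replace (JJ k l T) with 0. rewrite Rminus_0_r, Rabs_R0; auto.
      symmetry; unfold JJ; cbv zeta; destruct (Req_EM_T _ 0) as [?|Hw0]; rewrite ?HP, ?HQ; [ring | field; exact Hw0].
    + destruct (ab_small l Hl) as [Ha Hb].
      assert (PP k l = 0 /\ QQ k l = 0) as [HP HQ] by (unfold PP, QQ; rewrite Ha, Hb; split; ring).
      replace (JJ k l T) with 0. rewrite Rminus_0_r, Rabs_R0; auto.
      symmetry; unfold JJ; cbv zeta; destruct (Req_EM_T _ 0) as [?|Hw0]; rewrite ?HP, ?HQ; [ring | field; exact Hw0].
    + rewrite Rminus_0_r. pose proof (LL_neq k l Hk Hl Hne) as Hw.
      eapply Rle_trans. apply JJ_bound; auto.
      pose proof (Aq_nonneg k l). pose proof (Aq_nonneg l k).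
      assert (0 <= 8 * CC ^ 2) by (pose proof (pow2_ge_0 CC); lra).
      destruct (Nat.lt_ge_cases l k) as [Hlk|Hkl].
      * pose proof (pair_bound k l Hl Hlk). pose proof (LL_lt k l Hl Hlk).
        rewrite Rabs_right by lra.
        assert (Aq l k = E (- p1) l * E (- p2) (k - l)) by (unfold Aq; destruct (Nat.ltb_spec l k); try lia; reflexivity).
        unfold Psi. unfold Rdiv in *.
        apply Rle_trans with (8 * CC ^ 2 * Aq l k). rewrite H5.
        replace (8 * (alpha k * alpha l) * / (LL k - LL l)) with (8 * (alpha k * alpha l * / (LL k - LL l))) by ring.
        replace (8 * CC ^ 2 * (E (- p1) l * E (- p2) (k - l))) with (8 * (CC ^ 2 * (E (- p1) l * E (- p2) (k - l)))) by ring.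
        apply Rmult_le_compat_l; lra. nra.
      * assert (Hlk : (k < l)%nat) by lia.
        pose proof (pair_bound l k Hk Hlk). pose proof (LL_lt l k Hk Hlk).
        rewrite Rabs_left by lra.
        assert (Aq k l = E (- p1) k * E (- p2) (l - k)) by (unfold Aq; destruct (Nat.ltb_spec k l); try lia; reflexivity).
        unfold Psi. unfold Rdiv in *.
        replace (- (LL k - LL l)) with (LL l - LL k) by ring.
        apply Rle_trans with (8 * CC ^ 2 * Aq k l). rewrite H5.
        replace (8 * (alpha k * alpha l) * / (LL l - LL k)) with (8 * (alpha l * alpha k * / (LL l - LL k))) by ring.
        replace (8 * CC ^ 2 * (E (- p1) k * E (- p2) (l - k))) with (8 * (CC ^ 2 * (E (- p1) k * E (- p2) (l - k)))) by ring.
        apply Rmult_le_compat_l; lra. nra.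
Qed.


Definition Z1 := 2 + 1 / (p1 - 1).
Definition Z2 := 2 + 1 / (p2 - 1).
Lemma p1_gt : 1 < p1. Proof. unfold p1; lra. Qed.
Lemma p2_gt : 1 < p2. Proof. unfold p2; lra. Qed.

Lemma SumA N : rsum (fun k => rsum (fun l => Aq k l) N) N <= Z1 * Z2.
Proof. eapply Rle_trans. apply rsum_le with (g := fun k => E (- p1) k * Z2).
  - intros k _. unfold Aq.
    replace (rsum (fun l => if Nat.ltb k l then E (- p1) k * E (- p2) (l - k) else 0) N)
      with (E (- p1) k * rsum (fun l => if Nat.ltb k l then E (- p2) (l - k) else 0) N).
    2:{ rewrite <- rsum_scal. apply rsum_ext; intros. destruct (Nat.ltb k i); ring. }
    apply Rmult_le_compat_l. left; apply E_pos. rewrite rsum_offset.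
    eapply Rle_trans. 2: apply (Zbound p2 (N - k) p2_gt).
    apply rsum_le. intros j _. destruct (Nat.ltb 0 j). lra. left; apply E_pos.
  - replace (rsum (fun k => E (- p1) k * Z2) N) with (Z2 * rsum (E (- p1)) N).
    2:{ rewrite <- rsum_scal. apply rsum_ext; intros; ring. }
    pose proof (Zbound p1 N p1_gt). fold Z1 in H.
    assert (0 < Z2) by (unfold Z2; pose proof p2_gt; assert (0 < 1 / (p2 - 1)) by (apply Rdiv_lt_0_compat; lra); lra).
    nra.
Qed.

Definition K0 := 16 * CC ^ 2 * (Z1 * Z2).

Lemma SumPsi N : rsum (fun k => rsum (fun l => Psi k l) N) N <= K0.
Proof. unfold Psi, K0.
  assert (HS : rsum (fun k => rsum (fun l => Aq l k) N) N = rsum (fun k => rsum (fun l => Aq k l) N) N).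
  { rewrite (rsum_swap (fun k l => Aq l k)). reflexivity. }
  replace (rsum (fun k => rsum (fun l => 8 * CC ^ 2 * (Aq k l + Aq l k)) N) N) with
    (8 * CC ^ 2 * (rsum (fun k => rsum (fun l => Aq k l) N) N + rsum (fun k => rsum (fun l => Aq l k) N) N)).
  2:{ rewrite <- rsum_plus, <- rsum_scal. apply rsum_ext; intros.
      rewrite <- rsum_plus, <- rsum_scal. apply rsum_ext; intros. reflexivity. }
  rewrite HS.
  pose proof (SumA N). pose proof (pow2_ge_0 CC).
  assert (8 * CC ^ 2 * (rsum (fun k => rsum (fun l => Aq k l) N) N + rsum (fun k => rsum (fun l => Aq k l) N) N)
    <= 8 * CC ^ 2 * (Z1 * Z2 + Z1 * Z2)) by (apply Rmult_le_compat_l; lra).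
  lra.
Qed.

Lemma rsum_delta (c : nat -> R) k N : rsum (fun l => if Nat.eqb k l then c l else 0) N = if Nat.ltb k N then c k else 0.
Proof. induction N. simpl. destruct (Nat.ltb_spec k 0); try lia; reflexivity.
  cbn [rsum]. rewrite IHN. bdestr; try lia; subst; ring. Qed.

Lemma rsum_minus f g n : rsum f n - rsum g n = rsum (fun i => f i - g i) n.
Proof. induction n; simpl; lra. Qed.

Definition DN N := rsum (fun k => alpha k ^ 2) N.
Definition VN N T := rsum (fun k => rsum (fun l => JJ k l T) N) N.

Lemma diff_bound N T : Rabs (VN N T - (T - 2) * DN N) <= K0.
Proof. unfold VN, DN.
  replace ((T - 2) * rsum (fun k => alpha k ^ 2) N) with
    (rsum (fun k => rsum (fun l => if Nat.eqb k l then (T - 2) * alpha k ^ 2 else 0) N) N).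
  2:{ rewrite <- rsum_scal. apply rsum_ext. intros k Hk.
      rewrite (rsum_ext _ (fun l => if Nat.eqb k l then (T - 2) * alpha l ^ 2 else 0)).
      rewrite rsum_delta. destruct (Nat.ltb_spec k N); try lia; reflexivity.
      intros. destruct (Nat.eqb_spec k i); subst; reflexivity. }
  rewrite rsum_minus. eapply Rle_trans. apply rsum_abs. eapply Rle_trans. 2: apply (SumPsi N).
  apply rsum_le. intros k _. rewrite rsum_minus. eapply Rle_trans. apply rsum_abs.
  apply rsum_le. intros l _. apply JJ_pair.
Qed.

Lemma VN_int N T : is_RInt (fun t => Cmod (HH N t) ^ 2) 2 T (VN N T).
Proof. eapply is_RInt_ext. 2: apply is_RInt_rsum; intros k; apply is_RInt_rsum; intros l; apply FF_int.
  intros. rewrite HH_sq. reflexivity. Qed.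


Definition Dser := Series (fun k => alpha k ^ 2).

Lemma alpha_sq_bound k : Rabs (alpha k ^ 2) <= CC ^ 2 * E (- pp) k.
Proof. pose proof (B2 k). pose proof (alpha_nonneg k). pose proof (E_pos (-pp) k).
  pose proof (E_le_1 (-pp) k ltac:(unfold pp; lra)).
  rewrite Rabs_right by (apply Rle_ge, pow_le; auto).
  assert (0 <= CC) by (unfold CC; pose proof c1_pos; pose proof Zr_pos; nra).
  simpl. rewrite Rmult_1_r.
  apply Rle_trans with ((CC * E (- pp) k) * (CC * E (- pp) k)). apply Rmult_le_compat; auto.
  simpl. rewrite Rmult_1_r. nra.
Qed.

Lemma DN_lim : is_lim_seq DN Dser.
Proof. unfold DN, Dser. apply series_lim with (v := fun k => CC ^ 2 * E (- pp) k) (Bv := CC ^ 2 * (2 + 1 / (pp - 1))).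
  apply alpha_sq_bound. intros n. rewrite rsum_scal. apply Rmult_le_compat_l. apply pow2_ge_0. apply Zbound, pp1. Qed.

Definition BH := CC * (2 + 1 / (pp - 1)).

Lemma BH_bound N t : Cmod (HH N t) <= BH.
Proof. unfold HH. eapply Rle_trans. apply Cmod_csum.
  eapply Rle_trans. apply rsum_le with (g := fun k => CC * E (- pp) k).
  intros k _. rewrite Cmod_mult, Cmod_Cinv_cpow. simpl (Re (sig3, t)). eapply Rle_trans. 2: apply (B2 k).
  unfold alpha. right; ring.
  rewrite rsum_scal. unfold BH. apply Rmult_le_compat_l.
  unfold CC; pose proof c1_pos; pose proof Zr_pos; nra. apply Zbound, pp1. Qed.

Lemma BH_nonneg : 0 <= BH.
Proof. pose proof (BH_bound 0 0). pose proof (Cmod_ge_0 (HH 0 0)). lra. Qed.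

Lemma epsN_small eps : 0 < eps -> exists N0, forall N, (N0 <= N)%nat -> (2 <= N)%nat /\ epsN N < eps.
Proof. intros He. pose proof pp1. pose proof B0_pos.
  set (th := eps * (pp - 1) / (3 * B0)).
  assert (Hth : 0 < th) by (unfold th; apply Rdiv_lt_0_compat; nra).
  destruct (E_lim pp th pp1 Hth) as [K1 HK1].
  exists (2 * K1 + 2)%nat. intros N HN. split. lia.
  pose proof (Nat.div2_odd N) as Hd.
  assert (Hd' : (2 * Nat.div2 N <= N <= 2 * Nat.div2 N + 1)%nat) by (destruct (Nat.odd N); simpl in Hd; lia).
  pose proof (HK1 (N - 1)%nat ltac:(lia)). pose proof (HK1 (Nat.div2 N) ltac:(lia)).
  unfold epsN. pose proof (E_pos (1 - pp) (N-1)). pose proof (E_pos (1-pp) (Nat.div2 N)).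
  assert (E (1 - pp) (N - 1) / (pp - 1) < th / (pp - 1)) by (apply Rmult_lt_compat_r; [apply Rinv_0_lt_compat; lra| auto]).
  assert (E (1 - pp) (Nat.div2 N) / (pp - 1) < th / (pp - 1)) by (apply Rmult_lt_compat_r; [apply Rinv_0_lt_compat; lra| auto]).
  assert (th / (pp - 1) * (3 * B0) = eps) by (unfold th; field; lra).
  nra.
Qed.

Lemma unif_conv : filterlim (fun N t => Cmod (HH N t) ^ 2) eventually
  (locally (T := fct_UniformSpace R R_UniformSpace) (fun t => Cmod (zetaAV2 s1 s2 (sig3, t)) ^ 2)).
Proof. apply filterlim_locally. intros [eps He]. simpl.
  pose proof BH_nonneg.
  set (e0 := Rmin 1 (eps / (2 * BH + 2))).
  assert (He0 : 0 < e0) by (unfold e0; apply Rmin_pos; [lra| apply Rdiv_lt_0_compat; lra]).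
  assert (He1 : e0 <= 1) by apply Rmin_l.
  assert (He2 : e0 * (2 * BH + 2) <= eps).
  { unfold e0. pose proof (Rmin_r 1 (eps / (2 * BH + 2))).
    apply Rle_trans with (eps / (2 * BH + 2) * (2 * BH + 2)). apply Rmult_le_compat_r; lra.
    right; field; lra. }
  destruct (epsN_small e0 He0) as [N0 HN0]. exists N0. intros N HN t.
  destruct (HN0 N HN) as [HN2 Hlt].
  pose proof (uniform N t HN2) as Hu. pose proof (BH_bound N t) as Hb.
  unfold ball; simpl. unfold AbsRing_ball, abs, minus, plus, opp; simpl.
  set (Z := zetaAV2 s1 s2 (sig3, t)) in *. set (Hh := HH N t) in *.
  assert (T1 : Cmod Z <= Cmod (Cminus Z Hh) + Cmod Hh).
  { replace Z with (Cplus (Cminus Z Hh) Hh) at 1 by ring. apply Cmod_triangle. }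
  assert (T2 : Cmod Hh <= Cmod (Cminus Z Hh) + Cmod Z).
  { replace Hh with (Cplus (Copp (Cminus Z Hh)) Z) at 1 by ring. eapply Rle_trans. apply Cmod_triangle.
    rewrite Cmod_opp. lra. }
  pose proof (Cmod_ge_0 Z). pose proof (Cmod_ge_0 Hh). pose proof (Cmod_ge_0 (Cminus Z Hh)).
  set (a := Cmod Hh) in *. set (b := Cmod Z) in *. set (d := Cmod (Cminus Z Hh)) in *.
  assert (Hd : d < e0) by lra.
  replace (a * (a * 1) + - (b * (b * 1))) with ((a - b) * (a + b)) by ring.
  rewrite Rabs_mult. rewrite (Rabs_right (a + b)) by lra.
  assert (Rabs (a - b) <= d) by (apply Rabs_le; lra).
  assert (a + b <= 2 * BH + 1) by lra.
  pose proof (Rabs_pos (a - b)).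
  apply Rle_lt_trans with (d * (2 * BH + 1)). apply Rmult_le_compat; lra.
  nra.
Qed.

Lemma main_bound T : Rabs (RInt (fun t => Cmod (zetaAV2 s1 s2 (sig3, t)) ^ 2) 2 T - (T - 2) * Dser) <= K0.
Proof.
  destruct (filterlim_RInt (fun N t => Cmod (HH N t) ^ 2) 2 T eventually _ _ (fun N => VN N T)
     (fun N => VN_int N T) unif_conv) as [I [HI HgI]].
  rewrite (is_RInt_unique _ _ _ _ HgI).
  assert (HI' : is_lim_seq (fun N => VN N T) I) by exact HI.
  pose proof (is_lim_seq_scal_l _ (T - 2) _ DN_lim) as HD. simpl in HD.
  pose proof (is_lim_seq_minus' _ _ _ _ HI' HD) as Hm.
  apply Rabs_le. split.
  - assert (Rbar_le (- K0) (I - (T - 2) * Dser)).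
    { eapply is_lim_seq_le. 2: apply is_lim_seq_const. 2: exact Hm.
      intros n. pose proof (diff_bound n T). apply Rabs_le_between in H. lra. }
    simpl in H. lra.
  - assert (Rbar_le (I - (T - 2) * Dser) K0).
    { eapply is_lim_seq_le. 3: apply is_lim_seq_const. 2: exact Hm.
      intros n. pose proof (diff_bound n T). apply Rabs_le_between in H. lra. }
    simpl in H. lra.
Qed.

Lemma zsq_eq : zetaAV2sq s1 s2 (RtoC (2 * sig3)) = RtoC Dser.
Proof. unfold zetaAV2sq, CSeries, RtoC, Dser. f_equal.
  - apply Series_ext. intros k. destruct (Nat.leb_spec 2 k).
    + rewrite cpow_inv. unfold cpow. simpl. unfold alpha. fold (gg k). unfold E.
      rewrite Ropp_0, !Rmult_0_l, cos_0.
      replace (- (2 * sig3) * ln (INR k)) with (- sig3 * ln (INR k) + - sig3 * ln (INR k)) by ring.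
      rewrite exp_plus. ring.
    + unfold alpha. rewrite gg_small by lia. rewrite Cmod_0. simpl. ring.
  - transitivity (Series (fun n => 0 * 0)).
    + apply Series_ext. intros k. destruct (Nat.leb_spec 2 k).
      * rewrite cpow_inv. unfold cpow. simpl. rewrite Ropp_0, !Rmult_0_l, sin_0. ring.
      * simpl. ring.
    + rewrite Series_scal_l. ring.
Qed.

Lemma final : exists K T0 : R, forall T : R, T >= T0 ->
    Cmod (Cminus (RtoC (RInt (fun t3 => Cmod (zetaAV2 s1 s2 (sig3, t3)) ^ 2) 2 T))
                 (Cmult (zetaAV2sq s1 s2 (RtoC (2 * sig3))) (RtoC T))) <= K.
Proof. exists (K0 + 2 * Rabs Dser), 2. intros T HT. rewrite zsq_eq.
  set (I := RInt (fun t3 => Cmod (zetaAV2 s1 s2 (sig3, t3)) ^ 2) 2 T).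
  replace (Cminus (RtoC I) (Cmult (RtoC Dser) (RtoC T))) with (RtoC (I - Dser * T)).
  2:{ unfold RtoC, Cminus, Cmult, Cplus, Copp; simpl. f_equal; ring. }
  rewrite Cmod_R. pose proof (main_bound T). fold I in H.
  replace (I - Dser * T) with ((I - (T - 2) * Dser) + (- 2) * Dser) by ring.
  eapply Rle_trans. apply Rabs_triang. rewrite Rabs_mult.
  replace (Rabs (-2)) with 2 by (rewrite Rabs_left by lra; ring). lra.
Qed.

End Main.


Theorem theorem1p1 (s1 s2 : C) (sigma3 : R) :
  Re s1 + sigma3 > 1 ->
  Re s1 + Re s2 + sigma3 > 2 ->
  exists K T0 : R, forall T : R, T >= T0 ->
    Cmod (Cminus (RtoC (RInt (fun t3 => Cmod (zetaAV2 s1 s2 (sigma3, t3)) ^ 2) 2 T))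
                 (Cmult (zetaAV2sq s1 s2 (RtoC (2 * sigma3))) (RtoC T))) <= K.
Proof.
  intros H1 H2.
  set (ep := Rmin (Re s1 + sigma3 - 1) (Re s1 + Re s2 + sigma3 - 2) / 2).
  assert (Hm1 := Rmin_l (Re s1 + sigma3 - 1) (Re s1 + Re s2 + sigma3 - 2)).
  assert (Hm2 := Rmin_r (Re s1 + sigma3 - 1) (Re s1 + Re s2 + sigma3 - 2)).
  assert (Hep : 0 < ep) by (unfold ep; apply Rmin_case; lra).
  assert (Hep1 : 2 * ep <= Re s1 + sigma3 - 1) by (unfold ep; lra).
  assert (Hep2 : 2 * ep <= Re s1 + Re s2 + sigma3 - 2) by (unfold ep; lra).
  destruct (Rle_dec 1 (Re s2)) as [Hs|Hs].
  - apply (final s1 s2 sigma3 ep (Re s2 + ep) (Re s1 + sigma3 - ep - 1)); lra.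
  - apply (final s1 s2 sigma3 (1 - Re s2 + ep) (1 + ep) (Re s1 + sigma3 - (1 - Re s2 + ep) - 1)); lra.
Qed.
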